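(* Let $k\in\mathbb N_0$. Let $S$ be the basic spinor representation of $Spin(3)$, realized as a $2$-dimensional irreducible left module over the complex Clifford algebra $\mathbb C_3$ (generated by $e_1,e_2,e_3$ with $e_je_l+e_le_j=-2\delta_{jl}$), and let $v^{\pm}$ be nonzero vectors with $-ie_{12}v^{\pm}=\pm v^{\pm}$ (where $e_{ij}=e_ie_j$). Let $\mathcal M_k(\mathbb R^3,S)$ be the space of $S$-valued polynomials $P$ on $\mathbb R^3$, homogeneous of degree $k$, with $\partial P=0$, where $\partial=e_1\frac{\partial}{\partial x_1}+e_2\frac{\partial}{\partial x_2}+e_3\frac{\partial}{\partial x_3}$. Consider on it the operators $$\tilde H=-i\Big(\frac{e_{12}}{2}+x_2\frac{\partial}{\partial x_1}-x_1\frac{\partial}{\partial x_2}\Big),\quad \tilde X^{\pm}=X^{\pm}+\omega^{\pm},$$ where $X^{+}=-2x_3\frac{\partial}{\partial z}+\overline z\frac{\partial}{\partial x_3}$, $X^{-}=2x_3\frac{\partial}{\partial\overline z}- z\frac{\partial}{\partial x_3}$, $z=x_1+ix_2$, $\frac{\partial}{\partial z}=\frac12(\partial_{x_1}-i\partial_{x_2})$, $\frac{\partial}{\partial \overline z}=\frac12(\partial_{x_1}+i\partial_{x_2})$, and $\omega^+=\frac12(e_{31}+ie_{23})$, $\omega^-=\frac12(-e_{31}+ie_{23})$ act by left multiplication. Then the (irreducible) $\mathfrak{sl}(2,\mathbb C)$-module $\mathcal M_k(\mathbb R^3,S)$ has a basis consisting of the polynomials $$F^k_0=\frac{1}{k!\,2^k}\,\overline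 z^k v^+\quad\text{and}\quad F^k_j=(\tilde X^-)^jF^k_0,\ \ 0<j\le 2k+1.$$ In addition, for each $j=0,\dots,2k+1$, $F^k_j$ is a weight vector with weight $k+\frac12-j$, i.e. $\tilde H F^k_j=(k+\frac12-j)F^k_j$.
   Context: The operators $\tilde H,\tilde X^+,\tilde X^-$ satisfy $[\tilde X^+,\tilde X^-]=2\tilde H$ and $[\tilde H,\tilde X^\pm]=\pm\tilde X^\pm$; they are the complexified infinitesimal action $L_{ij}=\frac{e_{ij}}2+x_j\partial_{x_i}-x_i\partial_{x_j}$ of $\mathfrak{so}(3)$ on $S$-valued polynomials, via $\tilde H=-iL_{12}$, $\tilde X^+=L_{31}+iL_{23}$, $\tilde X^-=-L_{31}+iL_{23}$. *)

(* Defs.v *)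
From mathcomp Require Import all_boot all_order all_algebra all_field.
From mathcomp Require Import mpoly.
Set Implicit Arguments. Unset Strict Implicit. Unset Printing Implicit Defensive.
Import GRing.Theory Num.Theory.
Local Open Scope ring_scope.

Notation Pol := {mpoly algC[3]}.
(* S-valued polynomials, S = C^2 (column vectors) *)
Notation SPol := 'cV[Pol]_2.

Definition i1 : 'I_3 := @Ordinal 3 0 isT.
Definition i2 : 'I_3 := @Ordinal 3 1 isT.
Definition i3 : 'I_3 := @Ordinal 3 2 isT.

Definition clifford_rel (E : 'I_3 -> 'M[algC]_2) : Prop :=
  forall j l : 'I_3, E j *m E l + E l *m E j = (-2 * (j == l)%:R) *: 1%:M.

Definition cst (A : 'M[algC]_2) : 'M[Pol]_2 := map_mx (fun c => c%:MP) A.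
Definition actC (A : 'M[algC]_2) (P : SPol) : SPol := cst A *m P.
Definition scS (c : algC) (P : SPol) : SPol := c%:MP *: P.
Definition sv (v : 'cV[algC]_2) : SPol := map_mx (fun c => c%:MP) v.

Definition dx (i : 'I_3) (P : SPol) : SPol := map_mx (mderiv i) P.
Definition mx (p : Pol) (P : SPol) : SPol := p *: P.

Definition x1 : Pol := 'X_i1.
Definition x2 : Pol := 'X_i2.
Definition x3 : Pol := 'X_i3.
Definition zz : Pol := x1 + 'i%:MP * x2.
Definition zbar : Pol := x1 - 'i%:MP * x2.

Definition dirac (E : 'I_3 -> 'M[algC]_2) (P : SPol) : SPol :=
  actC (E i1) (dx i1 P) + actC (E i2) (dx i2 P) + actC (E i3) (dx i3 P).

Definition Mk (E : 'I_3 -> 'M[algC]_2) (k : nat) (P : SPol) : Prop :=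
  (forall r c, P r c \is k.-homog) /\ dirac E P = 0.

Definition e2 (E : 'I_3 -> 'M[algC]_2) (a b : 'I_3) := E a *m E b.

Definition Ht (E : 'I_3 -> 'M[algC]_2) (P : SPol) : SPol :=
  scS (- 'i) (actC (2^-1 *: e2 E i1 i2) P + mx x2 (dx i1 P) - mx x1 (dx i2 P)).

Definition dzbar (P : SPol) : SPol := scS (2^-1) (dx i1 P + scS 'i (dx i2 P)).

Definition Xm (P : SPol) : SPol := mx (2%:R * x3) (dzbar P) - mx zz (dx i3 P).
Definition omegam (E : 'I_3 -> 'M[algC]_2) : 'M[algC]_2 :=
  2^-1 *: (- e2 E i3 i1 + 'i *: e2 E i2 i3).
Definition Xtm (E : 'I_3 -> 'M[algC]_2) (P : SPol) : SPol := Xm P + actC (omegam E) P.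

Definition F (E : 'I_3 -> 'M[algC]_2) (vp : 'cV[algC]_2) (k j : nat) : SPol :=
  iter j (Xtm E) (scS ((k`!)%:R * 2 ^+ k)^-1 (mx (zbar ^+ k) (sv vp))).

Definition is_basis_of (M : SPol -> Prop) (n : nat) (f : nat -> SPol) : Prop :=
  (forall j, (j < n)%N -> M (f j)) /\
  (forall c : 'I_n -> algC, \sum_(j < n) scS (c j) (f j) = 0 -> forall j, c j = 0) /\
  (forall P, M P -> exists c : 'I_n -> algC, P = \sum_(j < n) scS (c j) (f j)).

(* Main.v *)
Require Import Defs.
From mathcomp Require Import all_boot all_order all_algebra all_field.
From mathcomp Require Import mpoly.
From mathcomp Require Import ring zify.
Import GRing.Theory Num.Theory.
Local Open Scope ring_scope.


Definition Iq : Pol := 'i%:MP.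
Lemma IqI : Iq * Iq = -1.
Proof. by rewrite /Iq -mpolyCM -expr2 sqrCi mpolyCN. Qed.
Definition hq : Pol := (2^-1 : algC)%:MP.
Lemma hq2 : 2%:R * hq = 1.
Proof. by rewrite /hq -mpolyC_nat -mpolyCM mulfV ?pnatr_eq0 // mpolyC1. Qed.

Lemma dX (i j : 'I_3) : mderiv i ('X_j : Pol) = (j == i)%:R.
Proof.
rewrite mderivX mnm1E; case: eqP => [->|_]; last by rewrite scale0r.
have -> : (U_(i) - U_(i) = 0)%MM by apply/mnmP => l; rewrite !mnmE subnn.
by rewrite mpolyX0 scale1r.
Qed.

Lemma dC (i : 'I_3) c : mderiv i (c%:MP : Pol) = 0.
Proof. exact: mderivC. Qed.
Lemma dIq i : mderiv i Iq = 0. Proof. exact: mderivC. Qed.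
Lemma dhq i : mderiv i hq = 0. Proof. exact: mderivC. Qed.
Lemma dnat i n : mderiv i (n%:R : Pol) = 0.
Proof. by rewrite -mpolyC_nat mderivC. Qed.

Lemma dx1 i : mderiv i x1 = (i1 == i)%:R. Proof. exact: dX. Qed.
Lemma dx2 i : mderiv i x2 = (i2 == i)%:R. Proof. exact: dX. Qed.
Lemma dx3 i : mderiv i x3 = (i3 == i)%:R. Proof. exact: dX. Qed.

Definition xmS (p : Pol) : Pol := x3 * (mderiv i1 p + Iq * mderiv i2 p) - zz * mderiv i3 p.
Definition xpS (p : Pol) : Pol := - (x3 * (mderiv i1 p - Iq * mderiv i2 p)) + zbar * mderiv i3 p.
Definition hS (p : Pol) : Pol := - Iq * (x2 * mderiv i1 p - x1 * mderiv i2 p).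

Ltac dsimp := rewrite -?/Iq; repeat progress rewrite ?mderivD ?mderivB ?mderivN ?mderivM ?dIq ?dhq ?dnat ?dx1 ?dx2 ?dx3 /=;
  rewrite ?(mderiv_comm i1 i2) ?(mderiv_comm i1 i3) ?(mderiv_comm i2 i3).

Lemma S1 p : hS (xmS p) - xmS (hS p) = - xmS p.
Proof. rewrite /hS /xmS /zz. dsimp. ring: IqI. Qed.
Lemma S2 p : xpS (xmS p) - xmS (xpS p) = 2%:R * hS p.
Proof. rewrite /hS /xmS /xpS /zz /zbar. dsimp. ring: IqI. Qed.
Lemma S3 p : mderiv i1 (xmS p) - xmS (mderiv i1 p) = - mderiv i3 p.
Proof. rewrite /xmS /zz. dsimp. ring: IqI. Qed.
Lemma S4 p : mderiv i2 (xmS p) - xmS (mderiv i2 p) = - (Iq * mderiv i3 p).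
Proof. rewrite /xmS /zz. dsimp. ring: IqI. Qed.
Lemma S5 p : mderiv i3 (xmS p) - xmS (mderiv i3 p) = mderiv i1 p + Iq * mderiv i2 p.
Proof. rewrite /xmS /zz. dsimp. ring: IqI. Qed.


Definition clin (f : Pol -> Pol) :=
  forall (a b : algC) (p q : Pol), f (a%:MP * p + b%:MP * q) = a%:MP * f p + b%:MP * f q.

Lemma clin0 f : clin f -> f 0 = 0.
Proof. move=> h; have := h 0 0 0 0; by rewrite !mpolyC0 !mul0r addr0. Qed.
Lemma clinD f : clin f -> forall p q, f (p + q) = f p + f q.
Proof. move=> h p q; have := h 1 1 p q; by rewrite !mpolyC1 !mul1r. Qed.
Lemma clinZ f : clin f -> forall a p, f (a%:MP * p) = a%:MP * f p.
Proof. move=> h a p; have := h a 0 p 0; by rewrite !mpolyC0 !mul0r !addr0. Qed.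
Lemma clinN f : clin f -> forall p, f (- p) = - f p.
Proof. move=> h p; have := @clinZ f h (-1) p; by rewrite mpolyCN mpolyC1 !mulN1r. Qed.
Lemma clinB f : clin f -> forall p q, f (p - q) = f p - f q.
Proof. by move=> h p q; rewrite clinD // clinN. Qed.

Lemma clin_d i : clin (mderiv i).
Proof. by move=> a b p q; rewrite mderivD !mderiv_mulC. Qed.
Lemma clin_mul r f : clin f -> clin (fun p => r * f p).
Proof. by move=> h a b p q; rewrite h; ring. Qed.
Lemma clin_add f g : clin f -> clin g -> clin (fun p => f p + g p).
Proof. by move=> hf hg a b p q; rewrite hf hg; ring. Qed.
Lemma clin_sub f g : clin f -> clin g -> clin (fun p => f p - g p).
Proof. by move=> hf hg a b p q; rewrite hf hg; ring. Qed.
Lemma clin_opp f : clin f -> clin (fun p => - f p).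
Proof. by move=> hf a b p q; rewrite hf; ring. Qed.
Lemma clin_comp f g : clin f -> clin g -> clin (fun p => f (g p)).
Proof. by move=> hf hg a b p q; rewrite hg hf. Qed.

Lemma clin_xm : clin xmS.
Proof.
rewrite /xmS; apply: clin_sub; last by apply: clin_mul; apply: clin_d.
by apply: clin_mul; apply: clin_add; [exact: clin_d| apply: clin_mul; exact: clin_d].
Qed.
Lemma clin_xp : clin xpS.
Proof.
rewrite /xpS; apply: clin_add; last by apply: clin_mul; apply: clin_d.
by apply: clin_opp; apply: clin_mul; apply: clin_sub; [exact: clin_d| apply: clin_mul; exact: clin_d].
Qed.
Lemma clin_h : clin hS.
Proof.
by rewrite /hS; apply: clin_mul; apply: clin_sub; apply: clin_mul; apply: clin_d.
Qed.

Lemma cstE (A : 'M[algC]_2) r s : cst A r s = (A r s)%:MP.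
Proof. by rewrite mxE. Qed.

Lemma ord2 (r : 'I_2) : r = 0 \/ r = 1.
Proof. by case: r => -[|[|//]] Hr; [left|right]; apply/val_inj. Qed.

Lemma sum2 (V : nmodType) (F : 'I_2 -> V) : \sum_(s < 2) F s = F 0 + F 1.
Proof. rewrite !big_ord_recl big_ord0 addr0; congr (F _ + F _); exact/val_inj. Qed.

Lemma actCE A (P : SPol) r c : actC A P r c = (A r 0)%:MP * P 0 c + (A r 1)%:MP * P 1 c.
Proof. by rewrite /actC mxE sum2 !cstE. Qed.

Lemma eD (P Q : SPol) r c : (P + Q) r c = P r c + Q r c. Proof. by rewrite mxE. Qed.
Lemma eB (P Q : SPol) r c : (P - Q) r c = P r c - Q r c. Proof. by rewrite !mxE. Qed.
Lemma eN (P : SPol) r c : (- P) r c = - P r c. Proof. by rewrite !mxE. Qed.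
Lemma e0 r c : (0 : SPol) r c = 0. Proof. by rewrite !mxE. Qed.
Lemma escS a (P : SPol) r c : scS a P r c = a%:MP * P r c. Proof. by rewrite !mxE. Qed.
Lemma emx p (P : SPol) r c : mx p P r c = p * P r c. Proof. by rewrite !mxE. Qed.
Lemma emap (f : Pol -> Pol) (P : SPol) r c : map_mx f P r c = f (P r c). Proof. by rewrite !mxE. Qed.
Lemma eM (A B : 'M[algC]_2) r s : (A *m B) r s = A r 0 * B 0 s + A r 1 * B 1 s.
Proof. by rewrite !mxE sum2. Qed.
Lemma eAD (A B : 'M[algC]_2) r s : (A + B) r s = A r s + B r s. Proof. by rewrite !mxE. Qed.
Lemma eAB (A B : 'M[algC]_2) r s : (A - B) r s = A r s - B r s. Proof. by rewrite !mxE. Qed.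
Lemma eAN (A : 'M[algC]_2) r s : (- A) r s = - A r s. Proof. by rewrite !mxE. Qed.
Lemma eAZ a (A : 'M[algC]_2) r s : (a *: A) r s = a * A r s. Proof. by rewrite !mxE. Qed.
Lemma eA0 r s : (0 : 'M[algC]_2) r s = 0. Proof. by rewrite !mxE. Qed.

Ltac ent := repeat progress rewrite ?eD ?eB ?eN ?e0 ?escS ?emx ?emap ?actCE ?eM ?eAD ?eAB ?eAN ?eAZ ?eA0
   ?mpolyCD ?mpolyCB ?mpolyCM ?mpolyCN ?mpolyC0.

Lemma map_actC f A P : clin f -> map_mx f (actC A P) = actC A (map_mx f P).
Proof. by move=> hf; apply/matrixP => r c; rewrite emap !actCE hf !emap. Qed.

Lemma map_mxD' f (P Q : SPol) : clin f -> map_mx f (P + Q) = map_mx f P + map_mx f Q.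
Proof. by move=> hf; apply/matrixP => r c; rewrite emap !eD !emap clinD. Qed.
Lemma map_mxB' f (P Q : SPol) : clin f -> map_mx f (P - Q) = map_mx f P - map_mx f Q.
Proof. by move=> hf; apply/matrixP => r c; rewrite emap !eB !emap clinB. Qed.
Lemma map_mx_comp' (f g : Pol -> Pol) (P : SPol) : map_mx f (map_mx g P) = map_mx (fun p => f (g p)) P.
Proof. by apply/matrixP => r c; rewrite !mxE. Qed.

Lemma actC_comp A B (P : SPol) : actC A (actC B P) = actC (A *m B) P.
Proof. by apply/matrixP => r c; ent; ring. Qed.
Lemma actCDl A B (P : SPol) : actC (A + B) P = actC A P + actC B P.
Proof. by apply/matrixP => r c; ent; ring. Qed.
Lemma actCBl A B (P : SPol) : actC (A - B) P = actC A P - actC B P.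
Proof. by apply/matrixP => r c; ent; ring. Qed.
Lemma actCDr A (P Q : SPol) : actC A (P + Q) = actC A P + actC A Q.
Proof. by apply/matrixP => r c; ent; ring. Qed.
Lemma actCBr A (P Q : SPol) : actC A (P - Q) = actC A P - actC A Q.
Proof. by apply/matrixP => r c; ent; ring. Qed.
Lemma actCZl a A (P : SPol) : actC (a *: A) P = scS a (actC A P).
Proof. by apply/matrixP => r c; ent; ring. Qed.
Lemma actCZr a A (P : SPol) : actC A (scS a P) = scS a (actC A P).
Proof. by apply/matrixP => r c; ent; ring. Qed.
Lemma actC0 (P : SPol) : actC 0 P = 0.
Proof. by apply/matrixP => r c; ent; ring. Qed.
Lemma actC1 (P : SPol) : actC 1%:M P = P.
Proof.
apply/matrixP => r c; rewrite !actCE !mxE.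
have [->|->] : r = 0 \/ r = 1.
  by case: r => -[|[|//]] Hr; [left|right]; apply/val_inj.
  by rewrite /= mpolyC1 mpolyC0; ring.
by rewrite /= mpolyC1 mpolyC0; ring.
Qed.
Lemma actC_mx p A (P : SPol) : actC A (mx p P) = mx p (actC A P).
Proof. by apply/matrixP => r c; ent; ring. Qed.

Definition Op (A : 'M[algC]_2) (f : Pol -> Pol) (P : SPol) : SPol := actC A P + map_mx f P.

Lemma Op_comm A B f g (P : SPol) : clin f -> clin g ->
  Op A f (Op B g P) - Op B g (Op A f P) =
  Op (A *m B - B *m A) (fun p => f (g p) - g (f p)) P.
Proof.
move=> hf hg; rewrite /Op !actCDr !map_mxD' // !map_actC // !actC_comp !map_mx_comp' actCBl.
apply/matrixP => r c; ent; ring.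
Qed.


Section Cl.
Lemma sqE {E} (hE : clifford_rel E) j : E j *m E j = - 1%:M.
Proof.
have := hE j j; rewrite eqxx mulr1 => H.
have : 2%:R *: (E j *m E j) = 2%:R *: (- 1%:M : 'M[algC]_2).
  by rewrite scaler_nat mulr2n H scalerN scaleNr.
move/(congr1 (fun X => 2^-1 *: X)); rewrite !scalerA mulVf ?pnatr_eq0 // !scale1r; done.
Qed.

Lemma acE {E} (hE : clifford_rel E) j l : j != l -> E j *m E l = - (E l *m E j).
Proof.
move=> jl; have := hE j l; rewrite (negbTE jl) mulr0 scale0r => /eqP.
by rewrite addr_eq0 => /eqP.
Qed.

Lemma swA {E} (hE : clifford_rel E) a b (X : 'M[algC]_2) : a != b ->
  E a *m (E b *m X) = - (E b *m (E a *m X)).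
Proof. by move=> ab; rewrite !mulmxA (acE hE _ _ ab) mulNmx. Qed.
Lemma sqA {E} (hE : clifford_rel E) a (X : 'M[algC]_2) : E a *m (E a *m X) = - X.
Proof. by rewrite mulmxA (sqE hE) mulNmx mul1mx. Qed.
End Cl.

Lemma s21 {E} (hE : clifford_rel E) (X : 'M[algC]_2) : E i2 *m (E i1 *m X) = - (E i1 *m (E i2 *m X)). Proof. exact: swA. Qed.
Lemma s31 {E} (hE : clifford_rel E) (X : 'M[algC]_2) : E i3 *m (E i1 *m X) = - (E i1 *m (E i3 *m X)). Proof. exact: swA. Qed.
Lemma s32 {E} (hE : clifford_rel E) (X : 'M[algC]_2) : E i3 *m (E i2 *m X) = - (E i2 *m (E i3 *m X)). Proof. exact: swA. Qed.
Lemma a21 {E} (hE : clifford_rel E) : E i2 *m E i1 = - (E i1 *m E i2). Proof. exact: acE. Qed.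
Lemma a31 {E} (hE : clifford_rel E) : E i3 *m E i1 = - (E i1 *m E i3). Proof. exact: acE. Qed.
Lemma a32 {E} (hE : clifford_rel E) : E i3 *m E i2 = - (E i2 *m E i3). Proof. exact: acE. Qed.

Ltac mnorm hE := rewrite /e2; repeat progress rewrite ?mulmxDl ?mulmxDr ?mulmxBl ?mulmxBr ?mulNmx ?mulmxN
  -?scalemxAl -?scalemxAr -?mulmxA ?(s21 hE) ?(s31 hE) ?(s32 hE) ?(a21 hE) ?(a31 hE) ?(a32 hE)
  ?(sqA hE) ?(sqE hE) ?opprK ?mulmx1 ?mul1mx.

Lemma Ci : 'i * 'i = -1 :> algC. Proof. by rewrite -expr2 sqrCi. Qed.

Lemma h2c : 2%:R * 2^-1 = 1 :> algC. Proof. by rewrite mulfV ?pnatr_eq0. Qed.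

Ltac mfin := apply/matrixP => r s; rewrite !mxE ?sum2 ?mxE; (field: Ci; try done).

Definition Hm E : 'M[algC]_2 := (- 'i) *: (2^-1 *: e2 E i1 i2).
Definition omegap (E : 'I_3 -> 'M[algC]_2) : 'M[algC]_2 :=
  2^-1 *: (e2 E i3 i1 + 'i *: e2 E i2 i3).

Lemma M1 E (hE : clifford_rel E) : Hm E *m omegam E - omegam E *m Hm E = - omegam E.
Proof. rewrite /Hm /omegam. mnorm hE. mfin. Qed.
Lemma M2 E (hE : clifford_rel E) : omegap E *m omegam E - omegam E *m omegap E = 2%:R *: Hm E.
Proof. rewrite /Hm /omegam /omegap. mnorm hE. mfin. Qed.

Lemma M3a E (hE : clifford_rel E) : E i1 *m omegam E - omegam E *m E i1 = - E i3.
Proof. rewrite /omegam. mnorm hE. mfin. Qed.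
Lemma M3b E (hE : clifford_rel E) : E i2 *m omegam E - omegam E *m E i2 = - ('i *: E i3).
Proof. rewrite /omegam. mnorm hE. mfin. Qed.
Lemma M3c E (hE : clifford_rel E) : E i3 *m omegam E - omegam E *m E i3 = E i1 + 'i *: E i2.
Proof. rewrite /omegam. mnorm hE. mfin. Qed.

Lemma Ev E (hE : clifford_rel E) (vp : 'cV[algC]_2) : (- 'i) *: (e2 E i1 i2 *m vp) = vp ->
  E i1 *m vp = 'i *: (E i2 *m vp).
Proof.
move=> hv; rewrite -{1}hv /e2 -scalemxAr !mulmxA (sqE hE) !mulNmx mul1mx.
by rewrite scalerN scaleNr opprK.
Qed.

Lemma omegap_v E (hE : clifford_rel E) (vp : 'cV[algC]_2) : (- 'i) *: (e2 E i1 i2 *m vp) = vp ->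
  omegap E *m vp = 0.
Proof.
move=> hv; rewrite /omegap -scalemxAl mulmxDl -scalemxAl /e2 -!mulmxA (Ev _ hE _ hv).
rewrite -scalemxAr !mulmxA (a32 hE) mulNmx -mulmxA scalerN addNr.
by rewrite scaler0.
Qed.

Lemma Hm_v E (vp : 'cV[algC]_2) : (- 'i) *: (e2 E i1 i2 *m vp) = vp -> Hm E *m vp = 2^-1 *: vp.
Proof.
move=> hv; rewrite /Hm -!scalemxAl scalerA mulrC -scalerA.
by rewrite hv.
Qed.


Lemma XtmE E (P : SPol) : Xtm E P = Op (omegam E) xmS P.
Proof.
rewrite /Xtm /Op /Xm /dzbar addrC; congr (_ + _).
apply/matrixP => r c; ent; rewrite -/hq -/Iq /xmS.
have h := hq2; ring: h.
Qed.

Lemma HtE E (P : SPol) : Ht E P = Op (Hm E) hS P.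
Proof.
rewrite /Ht /Op /Hm; apply/matrixP => r c; ent; rewrite -/Iq /hS; ring.
Qed.

Definition Xtp E (P : SPol) : SPol := Op (omegap E) xpS P.

Lemma Op_ext A f g (P : SPol) : f =1 g -> Op A f P = Op A g P.
Proof. by move=> h; rewrite /Op (eq_map_mx _ h). Qed.

Lemma HX E (hE : clifford_rel E) (P : SPol) :
  Ht E (Xtm E P) - Xtm E (Ht E P) = - Xtm E P.
Proof.
rewrite !HtE !XtmE (Op_comm _ _ _ _ _ clin_h clin_xm) (M1 _ hE) (Op_ext _ _ _ _ S1).
by apply/matrixP => r c; rewrite /Op; ent; rewrite /=; ring.
Qed.

Lemma XX E (hE : clifford_rel E) (P : SPol) :
  Xtp E (Xtm E P) - Xtm E (Xtp E P) = scS 2%:R (Ht E P).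
Proof.
rewrite /Xtp !HtE !XtmE (Op_comm _ _ _ _ _ clin_xp clin_xm) (M2 _ hE) (Op_ext _ _ _ _ S2).
apply/matrixP => r c; rewrite /Op; ent; rewrite /= ?mpolyC1. ring.
Qed.

Lemma dirac_Op E W f (P : SPol) : clin f ->
 dirac E (Op W f P) - Op W f (dirac E P) =
  actC (E i1 *m W - W *m E i1) (dx i1 P) + actC (E i2 *m W - W *m E i2) (dx i2 P)
  + actC (E i3 *m W - W *m E i3) (dx i3 P)
  + actC (E i1) (map_mx (fun p => mderiv i1 (f p) - f (mderiv i1 p)) P)
  + actC (E i2) (map_mx (fun p => mderiv i2 (f p) - f (mderiv i2 p)) P)
  + actC (E i3) (map_mx (fun p => mderiv i3 (f p) - f (mderiv i3 p)) P).
Proof.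
move=> hf; rewrite /dirac /Op /dx !(map_mxD' _ _ _ (clin_d _)) !(map_actC _ _ _ (clin_d _)) !map_mx_comp'.
rewrite !actCDr !(map_mxD' _ _ _ hf) !(map_actC _ _ _ hf) !map_mx_comp' !actC_comp.
by apply/matrixP => r c; ent; rewrite /=; ring.
Qed.

Lemma DX E (hE : clifford_rel E) (P : SPol) : dirac E (Xtm E P) = Xtm E (dirac E P).
Proof.
apply/eqP; rewrite -subr_eq0; apply/eqP.
rewrite !XtmE (dirac_Op _ _ _ _ clin_xm) (M3a _ hE) (M3b _ hE) (M3c _ hE).
rewrite (eq_map_mx _ S3) (eq_map_mx _ S4) (eq_map_mx _ S5).
by apply/matrixP => r c; ent; rewrite /= /Iq /dx; ent; ring.
Qed.


Lemma esv (v : 'cV[algC]_2) r c : sv v r c = (v r c)%:MP. Proof. by rewrite mxE. Qed.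
Lemma eMv (A : 'M[algC]_2) (v : 'cV[algC]_2) r c : (A *m v) r c = A r 0 * v 0 c + A r 1 * v 1 c.
Proof. by rewrite !mxE sum2. Qed.
Lemma eZv a (v : 'cV[algC]_2) r c : (a *: v) r c = a * v r c. Proof. by rewrite mxE. Qed.
Lemma e0v r c : (0 : 'cV[algC]_2) r c = 0. Proof. by rewrite mxE. Qed.

Lemma clinZr f : clin f -> forall a p, f (p * a%:MP) = a%:MP * f p.
Proof. by move=> h a p; rewrite mulrC clinZ. Qed.

Ltac ent2 := repeat progress (ent; rewrite ?esv ?eMv ?eZv ?e0v ?mpolyC1 ?mpolyC_nat).

Lemma OpD A f (P Q : SPol) : clin f -> Op A f (P + Q) = Op A f P + Op A f Q.
Proof. move=> hf; rewrite /Op actCDr map_mxD' //; apply/matrixP => r c; ent; ring. Qed.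
Lemma OpZ A f a (P : SPol) : clin f -> Op A f (scS a P) = scS a (Op A f P).
Proof. move=> hf; rewrite /Op actCZr; apply/matrixP => r c; ent; rewrite (@clinZ f hf); ring. Qed.
Lemma Op0 A f : clin f -> Op A f 0 = 0.
Proof. move=> hf; apply/matrixP => r c; rewrite /Op; ent; rewrite (@clin0 f hf); ring. Qed.
Lemma Op_mxsv A f p v : clin f -> Op A f (mx p (sv v)) = mx p (sv (A *m v)) + mx (f p) (sv v).
Proof. move=> hf; apply/matrixP => r c; rewrite /Op; ent2; rewrite (@clinZr f hf); ring. Qed.

Lemma diracZ E a (P : SPol) : dirac E (scS a P) = scS a (dirac E P).
Proof. apply/matrixP => r c; rewrite /dirac /dx; ent; rewrite !mderiv_mulC; ring. Qed.
Lemma diracD E (P Q : SPol) : dirac E (P + Q) = dirac E P + dirac E Q.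
Proof. apply/matrixP => r c; rewrite /dirac /dx; ent; rewrite !mderivD; ring. Qed.
Lemma dirac_mxsv E p v : dirac E (mx p (sv v)) = mx (mderiv i1 p) (sv (E i1 *m v))
  + mx (mderiv i2 p) (sv (E i2 *m v)) + mx (mderiv i3 p) (sv (E i3 *m v)).
Proof.
apply/matrixP => r c; rewrite /dirac /dx; ent2; rewrite !(clinZr _ (clin_d _)); ring.
Qed.

Lemma dzpow i k : mderiv i (zbar ^+ k) = k%:R * zbar ^+ k.-1 * mderiv i zbar.
Proof.
elim: k => [|k IH]; first by rewrite expr0 -mpolyC1 mderivC mul0r mul0r.
rewrite exprS mderivM IH; case: k {IH} => [|k] /=; first by rewrite expr0 !mul0r; ring.
rewrite exprS mulrS; ring.
Qed.

Lemma dz1 : mderiv i1 zbar = 1. Proof. rewrite /zbar -/Iq; dsimp; ring. Qed.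
Lemma dz2 : mderiv i2 zbar = - Iq. Proof. rewrite /zbar -/Iq; dsimp; ring. Qed.
Lemma dz3 : mderiv i3 zbar = 0. Proof. rewrite /zbar -/Iq; dsimp; ring. Qed.

Lemma hzpow k : hS (zbar ^+ k) = k%:R * zbar ^+ k.
Proof.
rewrite /hS !dzpow dz1 dz2; case: k => [|k] /=; first by ring.
rewrite exprSr; set Z := zbar ^+ k; rewrite /zbar; ring: IqI.
Qed.
Lemma xpzpow k : xpS (zbar ^+ k) = 0.
Proof.
rewrite /xpS !dzpow dz1 dz2 dz3; ring: IqI.
Qed.


Lemma FS E vp k j : F E vp k j.+1 = Xtm E (F E vp k j).
Proof. by rewrite /F iterS. Qed.
Lemma F0E E vp k : F E vp k 0 = scS ((k`!)%:R * 2 ^+ k)^-1 (mx (zbar ^+ k) (sv vp)).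
Proof. by []. Qed.

Lemma XtmZ E a (P : SPol) : Xtm E (scS a P) = scS a (Xtm E P).
Proof. by rewrite !XtmE (OpZ _ _ _ _ clin_xm). Qed.
Lemma XtmD E (P Q : SPol) : Xtm E (P + Q) = Xtm E P + Xtm E Q.
Proof. by rewrite !XtmE (OpD _ _ _ _ clin_xm). Qed.
Lemma Xtm0 E : Xtm E 0 = 0.
Proof. by rewrite !XtmE (Op0 _ _ clin_xm). Qed.
Lemma HtZ E a (P : SPol) : Ht E (scS a P) = scS a (Ht E P).
Proof. by rewrite !HtE (OpZ _ _ _ _ clin_h). Qed.
Lemma HtD E (P Q : SPol) : Ht E (P + Q) = Ht E P + Ht E Q.
Proof. by rewrite !HtE (OpD _ _ _ _ clin_h). Qed.
Lemma Ht0 E : Ht E 0 = 0.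
Proof. by rewrite !HtE (Op0 _ _ clin_h). Qed.
Lemma XtpZ E a (P : SPol) : Xtp E (scS a P) = scS a (Xtp E P).
Proof. by rewrite /Xtp (OpZ _ _ _ _ clin_xp). Qed.
Lemma Xtp0 E : Xtp E 0 = 0.
Proof. by rewrite /Xtp (Op0 _ _ clin_xp). Qed.

Lemma scSA a b (P : SPol) : scS a (scS b P) = scS (a * b) P.
Proof. by apply/matrixP => r c; ent; ring. Qed.
Lemma scSDl a b (P : SPol) : scS a P + scS b P = scS (a + b) P.
Proof. by apply/matrixP => r c; ent; ring. Qed.
Lemma scS1 (P : SPol) : scS 1 P = P.
Proof. by apply/matrixP => r c; ent; rewrite mpolyC1; ring. Qed.

Section FF.
Variables (E : 'I_3 -> 'M[algC]_2) (vp : 'cV[algC]_2) (k : nat).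
Hypotheses (hE : clifford_rel E) (hv : (- 'i) *: (e2 E i1 i2 *m vp) = vp).

Lemma Ht_F0 : Ht E (F E vp k 0) = scS (k%:R + 2^-1) (F E vp k 0).
Proof.
rewrite F0E HtE (OpZ _ _ _ _ clin_h) (Op_mxsv _ _ _ _ clin_h) (Hm_v _ _ hv) hzpow.
by apply/matrixP => r c; ent2; ring.
Qed.

Lemma Xtp_F0 : Xtp E (F E vp k 0) = 0.
Proof.
rewrite F0E /Xtp (OpZ _ _ _ _ clin_xp) (Op_mxsv _ _ _ _ clin_xp) (omegap_v _ hE _ hv) xpzpow.
by apply/matrixP => r c; ent2; ring.
Qed.

Lemma dirac_F0 : dirac E (F E vp k 0) = 0.
Proof.
rewrite F0E diracZ dirac_mxsv !dzpow dz1 dz2 dz3 (Ev _ hE _ hv).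
by apply/matrixP => r c; ent2; rewrite -/Iq; ring: IqI.
Qed.

Lemma Ht_F j : Ht E (F E vp k j) = scS (k%:R + 2^-1 - j%:R) (F E vp k j).
Proof.
elim: j => [|j IH]; first by rewrite Ht_F0 subr0.
have h := HX _ hE (F E vp k j).
have -> : Ht E (Xtm E (F E vp k j)) = Xtm E (Ht E (F E vp k j)) - Xtm E (F E vp k j).
  by rewrite -[LHS](subrK (Xtm E (Ht E (F E vp k j)))) h addrC.
rewrite FS IH XtmZ; apply/matrixP => r c; ent; rewrite -?natr1; ring.
Qed.

Definition cc (j : nat) : algC := j.+1%:R * (2%:R * k%:R + 1 - j%:R).

Lemma Xtp_F j : Xtp E (F E vp k j.+1) = scS (cc j) (F E vp k j).
Proof.
have step : forall P, Xtp E (Xtm E P) = Xtm E (Xtp E P) + scS 2%:R (Ht E P).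
  by move=> P; rewrite -[LHS](subrK (Xtm E (Xtp E P))) (XX _ hE) addrC.
elim: j => [|j IH].
  rewrite FS step Xtp_F0 Xtm0 add0r Ht_F0 scSA /cc.
  by congr (scS _ _); field.
rewrite FS step IH XtmZ -FS Ht_F scSA scSDl /cc; congr (scS _ _).
by rewrite -!natr1; field.
Qed.
End FF.


Lemma scS_eq0 a (P : SPol) : a != 0 -> scS a P = 0 -> P = 0.
Proof.
move=> a0 h; apply/matrixP => r c; have := congr1 (fun M : SPol => M r c) h.
rewrite /= escS e0 => /eqP; rewrite mulf_eq0 mpolyC_eq0 (negbTE a0) /= => /eqP ->.
by rewrite ?e0 ?mxE.
Qed.
Lemma scS0l (P : SPol) : scS 0 P = 0.
Proof. by apply/matrixP => r c; ent; ring. Qed.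
Lemma scS0r a : scS a (0 : SPol) = 0.
Proof. by apply/matrixP => r c; ent; ring. Qed.
Lemma scSDr a (P Q : SPol) : scS a (P + Q) = scS a P + scS a Q.
Proof. by apply/matrixP => r c; ent; ring. Qed.

Lemma zbar_neq0 : zbar != 0.
Proof.
apply/negP => /eqP h; have := dz1; rewrite h mderiv0 => /eqP.
by rewrite eq_sym oner_eq0.
Qed.

Lemma c0_neq0 k : ((k`!)%:R * 2 ^+ k)^-1 != 0 :> algC.
Proof.
by rewrite invr_eq0 mulf_neq0 ?expf_neq0 ?pnatr_eq0 // -lt0n fact_gt0.
Qed.

Section GG.
Variables (E : 'I_3 -> 'M[algC]_2) (vp : 'cV[algC]_2) (k : nat).
Hypotheses (hE : clifford_rel E) (hv : (- 'i) *: (e2 E i1 i2 *m vp) = vp) (hv0 : vp != 0).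

Lemma F0_neq0 : F E vp k 0 != 0.
Proof.
have [r hr] : exists r, vp r 0 != 0.
  case: (eqVneq (vp 0 0) 0) => h0; last by exists 0.
  case: (eqVneq (vp 1 0) 0) => h1; last by exists 1.
  exfalso; move/eqP: hv0; apply; apply/matrixP => r c; rewrite [c]ord1 [RHS]mxE.
  by case: (ord2 r) => ->.
apply/negP => /eqP h; have := congr1 (fun M : SPol => M r 0) h.
rewrite F0E /= escS emx esv e0 => /eqP.
by rewrite !mulf_eq0 !mpolyC_eq0 (negbTE (c0_neq0 k)) (negbTE hr) expf_eq0 (negbTE zbar_neq0) andbF.
Qed.

Lemma cc_neq0 j : (j <= 2 * k)%N -> cc k j != 0.
Proof.
move=> hj; rewrite /cc.
have -> : 2%:R * k%:R + 1 - j%:R = ((2 * k + 1 - j)%N)%:R :> algC.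
  rewrite natrB; last by lia.
  by rewrite natrD natrM.
by rewrite mulf_neq0 // pnatr_eq0; lia.
Qed.

Lemma F_neq0 j : (j <= 2 * k + 1)%N -> F E vp k j != 0.
Proof.
elim: j => [|j IH] hj; first exact: F0_neq0.
apply/negP => /eqP h; have := Xtp_F _ _ k hE hv j; rewrite h Xtp0 => /esym /scS_eq0.
have hj' : (j <= 2 * k)%N by lia.
move/(_ (cc_neq0 j hj')) => /eqP; apply/negP/IH; lia.
Qed.

Definition lam (j : nat) : algC := k%:R + 2^-1 - j%:R.

Lemma Ht_sum m (G : 'I_m -> SPol) : Ht E (\sum_(j < m) G j) = \sum_(j < m) Ht E (G j).
Proof. exact: (big_morph (Ht E) (HtD E) (Ht0 E)). Qed.
Lemma scS_sum a m (G : 'I_m -> SPol) : scS a (\sum_(j < m) G j) = \sum_(j < m) scS a (G j).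
Proof. exact: (big_morph (scS a) (scSDr a) (scS0r a)). Qed.

Lemma indep m : (m <= 2 * k + 2)%N -> forall c : 'I_m -> algC,
  \sum_(j < m) scS (c j) (F E vp k j) = 0 -> forall j, c j = 0.
Proof.
elim: m => [|m IH] hm c H; first by case.
have H2 : \sum_(j < m.+1) scS (c j * (lam j - lam m)) (F E vp k j) = 0.
  transitivity (Ht E (\sum_(j < m.+1) scS (c j) (F E vp k j)) -
                scS (lam m) (\sum_(j < m.+1) scS (c j) (F E vp k j))); last first.
    by rewrite H Ht0 scS0r subr0.
  rewrite Ht_sum scS_sum -sumrB; apply: eq_bigr => j _.
  rewrite HtZ (Ht_F _ _ k hE hv) /lam; apply/matrixP => r c'; ent; ring.
rewrite big_ord_recr /= subrr mulr0 scS0l addr0 in H2.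
have hc : forall j : 'I_m, c (widen_ord (leqnSn m) j) = 0.
  move=> j; have := IH (ltnW hm) _ H2 j => /eqP; rewrite mulf_eq0 => /orP [/eqP //|].
  rewrite /lam subr_eq0 => /eqP /addrI /oppr_inj /eqP; rewrite eqr_nat => /eqP hj.
  by have := ltn_ord j; rewrite hj ltnn.
rewrite big_ord_recr /= big1 ?add0r in H; last by move=> j _; rewrite hc scS0l.
have hcm : c ord_max = 0.
  case: (eqVneq (c ord_max) 0) => // hcm; have := scS_eq0 _ _ hcm H => /eqP.
  have hmk : (m <= 2 * k + 1)%N by lia.
  by rewrite (negbTE (F_neq0 _ hmk)).
move=> j; have [jm|jm] := ltnP j m.
  have -> : j = widen_ord (leqnSn m) (Ordinal jm) by apply/val_inj.
  exact: hc.
have -> : j = ord_max by apply/val_inj => /=; have := ltn_ord j; lia.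
exact: hcm.
Qed.
End GG.


Lemma homog_coef d (p : Pol) : (forall m, mdeg m != d -> p@_m = 0) -> p \is d.-homog.
Proof.
move=> h; apply/dhomogP => m; rewrite mcoeff_msupp => nz; apply/eqP.
by apply: contraNT nz => /h ->.
Qed.

Lemma mdegDU (m : 'X_{1..3}) i : mdeg (m + U_(i))%MM = (mdeg m).+1.
Proof. by rewrite mdegD mdeg1 addn1. Qed.

Lemma d_hom d (p : Pol) i : p \is d.+1.-homog -> mderiv i p \is d.-homog.
Proof.
move=> hp; apply: homog_coef => m hm; rewrite mcoeff_deriv.
by rewrite (dhomog_nemf_coeff hp) ?mul0rn //= mdegDU eqSS.
Qed.
Lemma d_hom0 (p : Pol) i : p \is 0.-homog -> mderiv i p = 0.
Proof.
move=> hp; apply/mpolyP => m; rewrite mcoeff_deriv mcoeff0.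
by rewrite (dhomog_nemf_coeff hp) ?mul0rn //= mdegDU.
Qed.

Lemma X_hom (i : 'I_3) : ('X_i : Pol) \is 1.-homog.
Proof. by rewrite dhomogX /= mdeg1. Qed.
Lemma C_hom d c (p : Pol) : p \is d.-homog -> c%:MP * p \is d.-homog.
Proof. by rewrite mul_mpolyC; apply: dhomogZ. Qed.
Lemma zz_hom : zz \is 1.-homog.
Proof. by rewrite /zz; apply: rpredD; [exact: X_hom | apply: C_hom; exact: X_hom]. Qed.
Lemma zbar_hom : zbar \is 1.-homog.
Proof. by rewrite /zbar; apply: rpredB; [exact: X_hom | apply: C_hom; exact: X_hom]. Qed.

Lemma xm_hom d (p : Pol) : p \is d.-homog -> xmS p \is d.-homog.
Proof.
case: d => [|d] hp.
  by rewrite /xmS !d_hom0 // mulr0 addr0 mulr0 mulr0 subr0 rpred0.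
rewrite /xmS; apply: rpredB.
  apply: (dhomogM (d := 1)); first exact: X_hom.
  by apply: rpredD; [exact: d_hom | apply: C_hom; exact: d_hom].
by apply: (dhomogM (d := 1)); [exact: zz_hom | exact: d_hom].
Qed.

Definition homS d (P : SPol) := forall r c, P r c \is d.-homog.

Lemma actC_hom d A P : homS d P -> homS d (actC A P).
Proof. by move=> h r c; rewrite actCE; apply: rpredD; apply: C_hom. Qed.
Lemma Xtm_hom E d P : homS d P -> homS d (Xtm E P).
Proof.
move=> h r c; rewrite XtmE /Op eD emap; apply: rpredD; first exact: actC_hom.
exact: xm_hom.
Qed.
Lemma F0_hom E vp k : homS k (F E vp k 0).
Proof.
move=> r c; rewrite F0E escS emx esv; apply: C_hom; rewrite mulrC; apply: C_hom.
have := dhomogMn k zbar_hom; by rewrite mul1n.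
Qed.

Lemma F_Mk E vp k (hE : clifford_rel E) (hv : (- 'i) *: (e2 E i1 i2 *m vp) = vp) j :
  Mk E k (F E vp k j).
Proof.
elim: j => [|j [IH1 IH2]]; first by split; [exact: F0_hom | exact: dirac_F0].
rewrite FS; split; first exact: Xtm_hom.
by rewrite (DX _ hE) IH2 Xtm0.
Qed.

Lemma Mk0 E k : Mk E k 0.
Proof.
split; first by move=> r c; rewrite e0 rpred0.
by apply/matrixP => r c; rewrite /dirac /dx; ent; rewrite mderiv0; ring.
Qed.
Lemma MkD E k P Q : Mk E k P -> Mk E k Q -> Mk E k (P + Q).
Proof.
move=> [h1 h2] [h3 h4]; split; first by move=> r c; rewrite eD; apply: rpredD.
by rewrite diracD h2 h4 addr0.
Qed.
Lemma MkZ E k a P : Mk E k P -> Mk E k (scS a P).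
Proof.
move=> [h1 h2]; split; first by move=> r c; rewrite escS; apply: C_hom.
by rewrite diracZ h2 scS0r.
Qed.


Definition cv (P : SPol) (m : 'X_{1..3}) : 'cV[algC]_2 := \col_r (P r 0)@_m.
Lemma cvE P m r c : cv P m r c = (P r 0)@_m. Proof. by rewrite mxE. Qed.
Lemma cv0 m : cv 0 m = 0.
Proof. by apply/matrixP => r c; rewrite cvE !mxE mcoeff0. Qed.

Lemma dirac_cv E P m : cv (dirac E P) m =
   (m i1).+1%:R *: (E i1 *m cv P (m + U_(i1))) + (m i2).+1%:R *: (E i2 *m cv P (m + U_(i2)))
 + (m i3).+1%:R *: (E i3 *m cv P (m + U_(i3))).
Proof.
apply/matrixP => r c; rewrite [c]ord1 cvE /dirac /dx; ent.
rewrite !mcoeffD !mcoeffCM !mcoeff_deriv.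
rewrite !mxE !sum2 !mxE; ring.
Qed.

Lemma uniq0 E (hE : clifford_rel E) P : dirac E P = 0 ->
  (forall m : 'X_{1..3}, m i3 = 0%N -> cv P m = 0) -> P = 0.
Proof.
move=> hD h0.
have key : forall t (m : 'X_{1..3}), m i3 = t -> cv P m = 0.
  elim=> [|t IH] m hm; first exact: h0.
  pose m' := (m - U_(i3))%MM.
  have hm' : m = (m' + U_(i3))%MM.
    apply/mnmP => i; rewrite mnmDE mnmBE mnm1E.
    have [<-|_] := eqVneq i3 i; first by rewrite hm subn1 addn1.
    by rewrite /= addn0 subn0.
  have hm3 : m' i3 = t by rewrite mnmBE mnm1E hm eqxx subn1.
  have := congr1 (fun Q => cv Q m') hD; rewrite dirac_cv cv0 -hm'.
  rewrite (IH (m' + U_(i1))%MM); last by rewrite mnmDE mnm1E hm3 /= addn0.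
  rewrite (IH (m' + U_(i2))%MM); last by rewrite mnmDE mnm1E hm3 /= addn0.
  rewrite !mulmx0 !scaler0 !add0r => /(congr1 (mulmx (E i3))).
  rewrite mulmx0 -scalemxAr mulmxA (sqE hE) mulNmx mul1mx scalerN => /eqP.
  rewrite oppr_eq0 scaler_eq0 pnatr_eq0 /= => /eqP //.
apply/matrixP => r c; rewrite [c]ord1; apply/mpolyP => m.
have := key _ m erefl => /matrixP /(_ r 0); rewrite cvE !mxE => ->.
by rewrite ?mxE ?mcoeff0.
Qed.

Lemma mdeg3 (m : 'X_{1..3}) : mdeg m = (m i1 + m i2 + m i3)%N.
Proof.
rewrite mdegE !big_ord_recl big_ord0 addn0 addnA.
by congr (m _ + m _ + m _); apply/val_inj.
Qed.

Lemma ord3 (i : 'I_3) : i = i1 \/ i = i2 \/ i = i3.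
Proof.
by case: i => -[|[|[|//]]] Hi; [left|right;left|right;right]; apply/val_inj.
Qed.

Lemma half2 a : (2 * a)./2 = a.
Proof. by rewrite mul2n doubleK. Qed.
Lemma half2S a : (1 + 2 * a)./2 = a.
Proof. by rewrite mul2n add1n /= uphalf_double. Qed.

Lemma half2r (r a : nat) : (r <= 1)%N -> ((r + 2 * a)./2 = a)%N.
Proof. by case: r => [|[|//]] _; [rewrite add0n half2 | rewrite half2S]. Qed.

Section Span.
Variables (E : 'I_3 -> 'M[algC]_2) (vp : 'cV[algC]_2) (k : nat).
Hypotheses (hE : clifford_rel E) (hv : (- 'i) *: (e2 E i1 i2 *m vp) = vp) (hv0 : vp != 0).

Definition mon (t : 'I_(2 * k + 2)) : 'X_{1..3} :=
  [multinom (if i == i1 then (k - t./2)%N else if i == i2 then (t./2)%N else 0%N) | i < 3].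
Definition rr (t : 'I_(2 * k + 2)) : 'I_2 := if odd t then 1 else 0.
Definition coordv (P : SPol) : 'rV[algC]_(2 * k + 2) := \row_t (P (rr t) 0)@_(mon t).

Lemma coordv_zero P : Mk E k P -> coordv P = 0 -> P = 0.
Proof.
move=> [hom hD] hc; apply: (uniq0 _ hE) => // m hm3.
apply/matrixP => r c; rewrite [c]ord1 cvE [RHS]mxE.
case: (eqVneq (mdeg m) k) => hd; last exact: (dhomog_nemf_coeff (hom r 0) hd).
rewrite mdeg3 hm3 addn0 in hd.
have ht : (r + 2 * m i2 < 2 * k + 2)%N by have := ltn_ord r; lia.
have := congr1 (fun v : 'rV_(2 * k + 2) => v 0 (Ordinal ht)) hc; rewrite !mxE.
have -> : rr (Ordinal ht) = r.
  rewrite /rr /= oddD oddM /=; case: (ord2 r) => -> //=.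
have -> : mon (Ordinal ht) = m; last by [].
apply/mnmP => i; rewrite mnmE /=.
have hh : ((r + 2 * m i2)./2 = m i2)%N.
  by apply: half2r; have := ltn_ord r.
rewrite hh; case: (ord3 i) => [->|[->|->]] //=; lia.
Qed.
End Span.


Lemma MkB E k P Q : Mk E k P -> Mk E k Q -> Mk E k (P - Q).
Proof.
move=> hP hQ; have -> : P - Q = P + scS (-1) Q.
  by apply/matrixP => r c; ent; rewrite mpolyC1; ring.
by apply: MkD => //; apply: MkZ.
Qed.

Lemma coordB k (P Q : SPol) : coordv k (P - Q) = coordv k P - coordv k Q.
Proof. by apply/matrixP => i t; rewrite !mxE mcoeffB. Qed.

Section Fin.
Variables (E : 'I_3 -> 'M[algC]_2) (vp : 'cV[algC]_2) (k : nat).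
Hypotheses (hE : clifford_rel E) (hv : (- 'i) *: (e2 E i1 i2 *m vp) = vp) (hv0 : vp != 0).

Definition Mat : 'M[algC]_(2 * k + 2) := \matrix_(j, t) coordv k (F E vp k j) 0 t.

Lemma Mk_sum (c : 'I_(2 * k + 2) -> algC) :
  Mk E k (\sum_(j < 2 * k + 2) scS (c j) (F E vp k j)).
Proof.
apply: (big_ind (Mk E k)); [exact: Mk0 | exact: MkD | move=> j _].
by apply: MkZ; apply: F_Mk.
Qed.

Lemma coord_lin (c : 'rV[algC]_(2 * k + 2)) :
  coordv k (\sum_(j < 2 * k + 2) scS (c 0 j) (F E vp k j)) = c *m Mat.
Proof.
apply/matrixP => i t; rewrite [i]ord1 !mxE summxE raddf_sum.
by apply: eq_bigr => j _; rewrite /= escS mcoeffCM !mxE.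
Qed.

Lemma Mat_unit : Mat \in unitmx.
Proof.
rewrite -row_free_unit; apply: inj_row_free => c hc.
have h0 : \sum_(j < 2 * k + 2) scS (c 0 j) (F E vp k j) = 0.
  by apply: (coordv_zero E vp k hE hv0 _ (Mk_sum _)); rewrite coord_lin.
apply/matrixP => i j; rewrite [i]ord1 mxE.
exact: (indep E vp k hE hv hv0 _ (leqnn _) (fun j => c 0 j) h0 j).
Qed.

Lemma span P : Mk E k P -> exists c : 'I_(2 * k + 2) -> algC,
  P = \sum_(j < 2 * k + 2) scS (c j) (F E vp k j).
Proof.
move=> hP; pose w := coordv k P *m invmx Mat; exists (fun j => w 0 j).
apply/eqP; rewrite -subr_eq0; apply/eqP.
apply: (coordv_zero E vp k hE hv0); first by apply: MkB => //; exact: Mk_sum.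
by rewrite coordB (coord_lin w) /w mulmxKV ?Mat_unit // subrr.
Qed.
End Fin.


Theorem proposition3p1 (k : nat) (E : 'I_3 -> 'M[algC]_2) (vp : 'cV[algC]_2) :
  clifford_rel E ->
  vp != 0 ->
  (- 'i) *: (e2 E i1 i2 *m vp) = vp ->
  is_basis_of (Mk E k) (2 * k + 2) (F E vp k) /\
  (forall j, (j <= 2 * k + 1)%N ->
     Ht E (F E vp k j) = scS (k%:R + 2^-1 - j%:R) (F E vp k j)).
Proof.
move=> hE hv0 hv; split.
  split; first by move=> j _; exact: F_Mk.
  split; first by move=> c H j; exact: (indep E vp k hE hv hv0 _ (leqnn _) c H j).
  by move=> P hP; apply: (span E vp k hE hv hv0).
by move=> j _; exact: (Ht_F E vp k hE hv j).
Qed.
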